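(* For a variety $\mathcal{V}$ the following are equivalent: (1) for every $\mathbf{A}\in\mathcal{V}$ and all congruences $\alpha,\beta,\gamma$ of $\mathbf{A}$, $\alpha\wedge(\beta\circ\gamma)\subseteq(\alpha\wedge\beta)\circ\gamma$; (2) for every $\mathbf{A}\in\mathcal{V}$ and all compatible reflexive relations $R,S,T$ of $\mathbf{A}$, $R\wedge(S\circ T)\subseteq(R\wedge S)\circ T$.
   Context: $\wedge$ is intersection and $\circ$ is relational composition. A compatible reflexive relation of $\mathbf{A}$ is a reflexive subuniverse of $\mathbf{A}^2$. *)

(* Defs.v *)
From mathcomp Require Import all_boot.
Set Implicit Arguments. Unset Strict Implicit. Unset Printing Implicit Defensive.

Record signature := Signature {
  op_sym : Type;
  arity : op_sym -> nat
}.

Record algebra (sg : signature) := Algebra {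
  carrier :> Type;
  interp : forall f : op_sym sg, ('I_(arity f) -> carrier) -> carrier
}.

Inductive term (sg : signature) : Type :=
| Var : nat -> term sg
| App : forall f : op_sym sg, ('I_(arity f) -> term sg) -> term sg.

Fixpoint eval (sg : signature) (A : algebra sg) (v : nat -> A) (t : term sg) : A :=
  match t with
  | Var n => v n
  | App f ts => @interp sg A f (fun i => eval v (ts i))
  end.

Definition satisfies (sg : signature) (A : algebra sg) (s t : term sg) : Prop :=
  forall v : nat -> A, eval v s = eval v t.

(* The variety defined by the set of identities E (a binary predicate on terms):
   A is in the variety iff it satisfies all identities in E. *)
Definition in_variety (sg : signature) (E : term sg -> term sg -> Prop)
  (A : algebra sg) : Prop :=
  forall s t, E s t -> satisfies A s t.

Definition compatible (sg : signature) (A : algebra sg) (R : A -> A -> Prop) : Prop :=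
  forall (f : op_sym sg) (a b : 'I_(arity f) -> A),
    (forall i, R (a i) (b i)) -> R (@interp sg A f a) (@interp sg A f b).

Definition reflexive_rel (X : Type) (R : X -> X -> Prop) : Prop := forall x, R x x.

Definition compatible_reflexive (sg : signature) (A : algebra sg)
  (R : A -> A -> Prop) : Prop :=
  reflexive_rel R /\ compatible R.

Definition congruence (sg : signature) (A : algebra sg) (R : A -> A -> Prop) : Prop :=
  [/\ reflexive_rel R, (forall x y, R x y -> R y x),
      (forall x y z, R x y -> R y z -> R x z) & compatible R].

Definition rel_meet (X : Type) (R S : X -> X -> Prop) : X -> X -> Prop :=
  fun x y => R x y /\ S x y.

Definition rel_comp (X : Type) (R S : X -> X -> Prop) : X -> X -> Prop :=
  fun x z => exists y, R x y /\ S y z.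

Definition rel_sub (X : Type) (R S : X -> X -> Prop) : Prop :=
  forall x y, R x y -> S x y.

(* Main.v *)
Require Import Defs.
From mathcomp Require Import all_boot.
From Stdlib Require Import FunctionalExtensionality ProofIrrelevance.

Section Aux.
Variable sg : signature.
Variable A : algebra sg.
Variables R S T : A -> A -> Prop.
Hypothesis cR : compatible R.
Hypothesis cS : compatible S.
Hypothesis cT : compatible T.

Definition pres (Q : A -> A -> Prop) (f : A -> A -> A -> A) : Prop :=
  forall x y z x' y' z', Q x x' -> Q y y' -> Q z z' -> Q (f x y z) (f x' y' z').

Definition Bc := {f : A -> A -> A -> A | pres R f /\ pres S f /\ pres T f}.

Definition opf (f : op_sym sg) (a : 'I_(arity f) -> Bc) : A -> A -> A -> A :=
  fun x y z => @interp sg A f (fun i => proj1_sig (a i) x y z).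

Lemma pres_op Q (cQ : compatible Q) f (a : 'I_(arity f) -> A -> A -> A -> A) :
  (forall i, pres Q (a i)) -> pres Q (fun x y z => @interp sg A f (fun i => a i x y z)).
Proof.
move=> H x y z x' y' z' h1 h2 h3; apply: cQ => i; exact: H.
Qed.

Definition opB (f : op_sym sg) (a : 'I_(arity f) -> Bc) : Bc.
Proof.
exists (opf f a); split; [|split]; apply: (@pres_op _ _ f (fun i => proj1_sig (a i))) => // i;
  by case: (proj2_sig (a i)) => [? [? ?]].
Defined.

Definition BA : algebra sg := @Algebra sg Bc opB.

Lemma Beq (u w : Bc) : proj1_sig u = proj1_sig w -> u = w.
Proof.
case: u => u pu; case: w => w pw /= e; subst; f_equal; apply: proof_irrelevance.
Qed.

Lemma evalB (v : nat -> BA) t :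
  proj1_sig (eval v t) = fun x y z => eval (fun n => proj1_sig (v n) x y z) t.
Proof.
elim: t => [n|f ts IH] //=.
apply: functional_extensionality => x; apply: functional_extensionality => y;
apply: functional_extensionality => z; rewrite /opf.
f_equal; apply: functional_extensionality => i; by rewrite IH.
Qed.

Lemma BA_var E : in_variety E A -> in_variety E BA.
Proof.
move=> HA s t Est v; apply: Beq; rewrite !evalB.
apply: functional_extensionality => x; apply: functional_extensionality => y;
apply: functional_extensionality => z; exact: HA.
Qed.

Definition kerc (g : A -> A -> A * A * A) : BA -> BA -> Prop :=
  fun u w => forall a c, proj1_sig u (g a c).1.1 (g a c).1.2 (g a c).2
                       = proj1_sig w (g a c).1.1 (g a c).1.2 (g a c).2.

Lemma kerc_cong g : congruence (kerc g).
Proof.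
split.
- by move=> x a c.
- by move=> x y H a c; rewrite H.
- by move=> x y z H1 H2 a c; rewrite H1 H2.
- move=> f a b H x c /=; rewrite /opf; f_equal;
  apply: functional_extensionality => i; exact: H.
Qed.

End Aux.
Arguments pres {sg A}.

Theorem theorem5p2 (sg : signature) (E : term sg -> term sg -> Prop) :
  (forall A : algebra sg, in_variety E A ->
     forall alpha beta gamma : A -> A -> Prop,
       congruence alpha -> congruence beta -> congruence gamma ->
       rel_sub (rel_meet alpha (rel_comp beta gamma))
               (rel_comp (rel_meet alpha beta) gamma))
  <->
  (forall A : algebra sg, in_variety E A ->
     forall R S T : A -> A -> Prop,
       compatible_reflexive R -> compatible_reflexive S -> compatible_reflexive T ->
       rel_sub (rel_meet R (rel_comp S T))
               (rel_comp (rel_meet R S) T)).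
Proof.
split; last first.
  move=> H2 A HA al be ga [r1 _ _ c1] [r2 _ _ c2] [r3 _ _ c3].
  by apply: H2 => //; split.
move=> H1 A HA R S T [rR cR] [rS cS] [rT cT] a c [Rac [b [Sab Tbc]]].
pose B := @BA sg A R S T cR cS cT.
have HB : in_variety E B by exact: (@BA_var sg A R S T cR cS cT E HA).
have pr1 : pres R (fun x y z => x) /\ pres S (fun x y z => x) /\ pres T (fun x y z => x).
  by split; [|split] => ??????.
have pr2 : pres R (fun x y z => y) /\ pres S (fun x y z => y) /\ pres T (fun x y z => y).
  by split; [|split] => ??????.
have pr3 : pres R (fun x y z => z) /\ pres S (fun x y z => z) /\ pres T (fun x y z => z).
  by split; [|split] => ??????.
pose px : B := exist _ _ pr1.
pose py : B := exist _ _ pr2.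
pose pz : B := exist _ _ pr3.
have := H1 B HB (@kerc sg A R S T cR cS cT (fun a c => (a, c, a))) (@kerc sg A R S T cR cS cT (fun a c => (a, a, c)))
  (@kerc sg A R S T cR cS cT (fun a c => (a, c, c))) (kerc_cong _ _ _ _ _ _ _ _ _) (kerc_cong _ _ _ _ _ _ _ _ _)
  (kerc_cong _ _ _ _ _ _ _ _ _) px pz.
case.
  split; first by move=> ??.
  exists py; split; by move=> ??.
move=> d [[Ha Hb] Hc]. rewrite /kerc /= in Ha Hb Hc.
case: d Ha Hb Hc => d [dR [dS dT]] /= Ha Hb Hc. idtac.
have {}Ha : forall x y, d x y x = x by move=> x y; by rewrite (Ha x y).
have {}Hb : forall x y, d x x y = x by move=> x y; by rewrite (Hb x y).
have {}Hc : forall x y, d x y y = y by move=> x y; by rewrite (Hc x y).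
exists (d a b c); split; [split|].
- rewrite -{1}(Ha a b); exact: dR.
- rewrite -{1}(Hb a c); exact: dS.
- rewrite -{2}(Hc a c); exact: dT.
Qed.
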